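(* For $j\in\mathbb{Z}_{\ge0}$, setting $U_j(x,y)=\sum_{l_1\ge0}\sum_{l_2\ge j}\beta_E(l_1+l_2+1)\beta_E(l_2)x^{l_1}y^{l_2}$ and $B_j(y)=\sum_{l\ge0}\beta_E(l+j)^2y^l$, one has \[ U_j(x,y)=y^j\cdot\frac{(q^{-1}\lambda-q^{-1}x-q^{-2}xy)B_j(y)+\beta_E(j)\beta_E(j+1)-q^{-1}\lambda\,\beta_E(j)^2}{(1-\lambda q^{-1}x+q^{-1}x^2)(1+q^{-1}y)}. \]
   Context: $F$ is a $p$-adic field with odd residue cardinality $q$, uniformizer $\varpi$. $\pi$ is an irreducible unitary unramified representation of $\mathrm{GL}_2(F)$ with trivial central character, a quotient of $\chi\times\chi^{-1}$ with $\chi$ unramified; $\alpha=\chi(\varpi)$, $\lambda=q^{1/2}(\alpha+\alpha^{-1})$. $\phi$ is the spherical unit vector, $E$ a quadratic étale algebra over $F$, $\alpha_E(\phi_1,\phi_2)=\int_{F^\times\backslash E^\times}\langle\pi(t)\phi_1,\phi_2\rangle d^\times t$ with $\alpha_E(\phi,\phi)\ne0$, and $\beta_E(l)=\alpha_E(\pi(\mathrm{diag}(\varpi^{-l},1))\phi,\phi)/\alpha_E(\phi,\phi)$, satisfying $q\beta_E(l+2)-\lambda\beta_E(l+1)+\beta_E(l)=0$. *)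

(* Defs.v *)
From HB Require Import structures.
From mathcomp Require Import all_boot all_order all_algebra.
Set Implicit Arguments. Unset Strict Implicit. Unset Printing Implicit Defensive.
Import Order.TTheory GRing.Theory Num.Theory.
Local Open Scope ring_scope.

(* Formal power series in two variables x, y over a ring R:
   f m n is the coefficient of x^m y^n. *)
Definition fps2 (R : Type) := nat -> nat -> R.

Section FPS2.
Variable R : pzRingType.

Definition fps2_const (c : R) : fps2 R := fun m n => if (m == 0%N) && (n == 0%N) then c else 0.
Definition fps2_X : fps2 R := fun m n => if (m == 1%N) && (n == 0%N) then 1 else 0.
Definition fps2_Y : fps2 R := fun m n => if (m == 0%N) && (n == 1%N) then 1 else 0.
Definition fps2_add (f g : fps2 R) : fps2 R := fun m n => f m n + g m n.
Definition fps2_opp (f : fps2 R) : fps2 R := fun m n => - f m n.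
Definition fps2_scale (c : R) (f : fps2 R) : fps2 R := fun m n => c * f m n.
Definition fps2_mul (f g : fps2 R) : fps2 R :=
  fun m n => \sum_(i < m.+1) \sum_(k < n.+1) f i k * g (m - i)%N (n - k)%N.
Definition fps2_exp (f : fps2 R) (k : nat) : fps2 R := iter k (fps2_mul f) (fps2_const 1).
End FPS2.

Declare Scope fps2_scope.
Delimit Scope fps2_scope with F.
Notation "f + g" := (fps2_add f g) : fps2_scope.
Notation "- f" := (fps2_opp f) : fps2_scope.
Notation "f - g" := (fps2_add f (fps2_opp g)) : fps2_scope.
Notation "f * g" := (fps2_mul f g) : fps2_scope.
Notation "c *: f" := (fps2_scale c f) : fps2_scope.
Notation "f ^+ k" := (fps2_exp f k) : fps2_scope.
Notation "c %:S" := (fps2_const c) (at level 2, format "c %:S") : fps2_scope.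
Notation "''x'" := (fps2_X _) : fps2_scope.
Notation "''y'" := (fps2_Y _) : fps2_scope.

Definition U_series (R : pzRingType) (beta : nat -> R) (j : nat) : fps2 R :=
  fun l1 l2 => if (j <= l2)%N then beta (l1 + l2).+1 * beta l2 else 0.

Definition B_series (R : pzRingType) (beta : nat -> R) (j : nat) : fps2 R :=
  fun l1 l => if l1 == 0%N then beta (l + j)%N ^+ 2 else 0.

(* Main.v *)
Require Import Defs.
From HB Require Import structures.
From mathcomp Require Import all_boot all_order all_algebra.
From Stdlib Require Import FunctionalExtensionality.
From mathcomp Require Import zify ring.
Import Order.TTheory GRing.Theory Num.Theory.
Local Open Scope ring_scope.
Definition mono (R : pzRingType) (a b : nat) : fps2 R :=
  fun m n => if (m == a) && (n == b) then 1 else 0.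

Section L.
Variable R : comPzRingType.
Implicit Types f g h : fps2 R.

Lemma sum_sub_eq (m a : nat) (F : nat -> R) :
  \sum_(i < m.+1) (if (m - i == a)%N then F i else 0) =
  if (a <= m)%N then F (m - a)%N else 0.
Proof.
case: leqP => am.
  have lt : (m - a < m.+1)%N by rewrite ltnS leq_subr.
  rewrite (bigD1 (Ordinal lt)) //= subKn // eqxx big1 ?addr0 // => i /eqP ne.
  case: eqP => // e; exfalso; apply: ne; apply: val_inj => /=.
  have := ltn_ord i; rewrite -e; lia.
rewrite big1 // => i _; case: eqP => // e; exfalso.
have := ltn_ord i; lia.
Qed.

Lemma sum_eq (m a : nat) (F : nat -> R) :
  \sum_(i < m.+1) (if ((i : nat) == a)%N then F i else 0) =
  if (a <= m)%N then F a else 0.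
Proof.
case: leqP => am.
  have lt : (a < m.+1)%N by rewrite ltnS.
  rewrite (bigD1 (Ordinal lt)) //= eqxx big1 ?addr0 // => i /eqP ne.
  case: eqP => // e; exfalso; apply: ne; apply: val_inj => /=; done.
rewrite big1 // => i _; case: eqP => // e; exfalso.
have := ltn_ord i; lia.
Qed.

Lemma mul_mono_r f a b m n :
  (f * mono R a b)%F m n = if (a <= m)%N && (b <= n)%N then f (m - a)%N (n - b)%N else 0.
Proof.
rewrite /fps2_mul /mono.
transitivity (\sum_(i < m.+1) if (m - i == a)%N then
   (\sum_(k < n.+1) if (n - k == b)%N then f i k else 0) else 0).
  apply: eq_bigr => i _; case: eqP => _ /=.
    by apply: eq_bigr => k _; case: eqP => _; rewrite ?mulr1 ?mulr0.
  by rewrite big1 // => k _; rewrite mulr0.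
rewrite (eq_bigr (fun i : 'I_m.+1 => if (m - i == a)%N then
   (if (b <= n)%N then f i (n - b)%N else 0) else 0)); last by move=> i _; rewrite (sum_sub_eq n b (f i)).
by rewrite (sum_sub_eq m a (fun i => if (b <= n)%N then f i (n - b)%N else 0)); case: (a <= m)%N.
Qed.

Lemma mul_mono_l f a b m n :
  (mono R a b * f)%F m n = if (a <= m)%N && (b <= n)%N then f (m - a)%N (n - b)%N else 0.
Proof.
rewrite /fps2_mul /mono.
transitivity (\sum_(i < m.+1) if ((i:nat) == a)%N then
   (\sum_(k < n.+1) if ((k:nat) == b)%N then f (m - i)%N (n - k)%N else 0) else 0).
  apply: eq_bigr => i _; case: eqP => _ /=.
    by apply: eq_bigr => k _; case: eqP => _; rewrite ?mul1r ?mul0r.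
  by rewrite big1 // => k _; rewrite mul0r.
rewrite (eq_bigr (fun i : 'I_m.+1 => if ((i:nat) == a)%N then
   (if (b <= n)%N then f (m - i)%N (n - b)%N else 0) else 0)); last first.
  by move=> i _; rewrite (sum_eq n b (fun k => f (m - i)%N (n - k)%N)).
by rewrite (sum_eq m a (fun i => if (b <= n)%N then f (m - i)%N (n - b)%N else 0)); case: (a <= m)%N.
Qed.

Lemma mulD_r f g h m n : (f * (g + h))%F m n = (f * g)%F m n + (f * h)%F m n.
Proof.
rewrite /fps2_mul /fps2_add -big_split; apply: eq_bigr => i _.
rewrite -big_split; apply: eq_bigr => k _; exact: mulrDr.
Qed.
Lemma mulD_l f g h m n : ((g + h) * f)%F m n = (g * f)%F m n + (h * f)%F m n.
Proof.
rewrite /fps2_mul /fps2_add -big_split; apply: eq_bigr => i _.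
rewrite -big_split; apply: eq_bigr => k _; exact: mulrDl.
Qed.
Lemma mulN_r f g m n : (f * (- g))%F m n = - (f * g)%F m n.
Proof.
rewrite /fps2_mul /fps2_opp -sumrN; apply: eq_bigr => i _.
rewrite -sumrN; apply: eq_bigr => k _; exact: mulrN.
Qed.
Lemma mulN_l f g m n : ((- g) * f)%F m n = - (g * f)%F m n.
Proof.
rewrite /fps2_mul /fps2_opp -sumrN; apply: eq_bigr => i _.
rewrite -sumrN; apply: eq_bigr => k _; exact: mulNr.
Qed.
Lemma mulZ_r f g c m n : (f * (c *: g))%F m n = c * (f * g)%F m n.
Proof.
rewrite /fps2_mul /fps2_scale mulr_sumr; apply: eq_bigr => i _.
rewrite mulr_sumr; apply: eq_bigr => k _; rewrite mulrCA //.
Qed.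
Lemma mulZ_l f g c m n : ((c *: g) * f)%F m n = c * (g * f)%F m n.
Proof.
rewrite /fps2_mul /fps2_scale mulr_sumr; apply: eq_bigr => i _.
rewrite mulr_sumr; apply: eq_bigr => k _; rewrite mulrA //.
Qed.

Lemma X_mono : fps2_X R = mono R 1 0. Proof. by []. Qed.
Lemma Y_mono : fps2_Y R = mono R 0 1. Proof. by []. Qed.
Lemma C1_mono : fps2_const (1 : R) = mono R 0 0. Proof. by []. Qed.
Lemma C_mono c : fps2_const c = (c *: mono R 0 0)%F.
Proof.
apply: functional_extensionality => m; apply: functional_extensionality => n.
by rewrite /fps2_const /fps2_scale /mono; case: ifP; rewrite ?mulr1 ?mulr0.
Qed.

Lemma mono_mul a b a' b' : (mono R a b * mono R a' b')%F = mono R (a + a') (b + b').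
Proof.
apply: functional_extensionality => m; apply: functional_extensionality => n.
rewrite mul_mono_l /mono.
case: (leqP a m) => am; case: (leqP b n) => bn /=.
- by congr (if _ then _ else _); apply/idP/idP => /andP [/eqP e1 /eqP e2];
    apply/andP; split; apply/eqP; lia.
- by case: ifP => // /andP [/eqP e1 /eqP e2]; lia.
- by case: ifP => // /andP [/eqP e1 /eqP e2]; lia.
- by case: ifP => // /andP [/eqP e1 /eqP e2]; lia.
Qed.

Lemma X2_mono : ((fps2_X R) ^+ 2)%F = mono R 2 0.
Proof. by rewrite /fps2_exp /= X_mono C1_mono !mono_mul. Qed.

Lemma Yj_mono j : ((fps2_Y R) ^+ j)%F = mono R 0 j.
Proof.
elim: j => [|j IH]; first by rewrite /fps2_exp /= C1_mono.
by rewrite /fps2_exp iterS -/(fps2_exp _ j) IH Y_mono mono_mul.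
Qed.
End L.

Lemma AB_mono (R : comPzRingType) (c qi : R) :
  ((1%:S - c *: 'x + qi *: ('x ^+ 2)) * (1%:S + qi *: 'y))%F =
  ((((( mono R 0 0 - c *: mono R 1 0) + qi *: mono R 2 0) + qi *: mono R 0 1)
     - (c * qi) *: mono R 1 1) + (qi * qi) *: mono R 2 1)%F.
Proof.
apply: functional_extensionality => m; apply: functional_extensionality => n.
rewrite X2_mono X_mono Y_mono C1_mono mulD_r mulZ_r !mul_mono_r.
rewrite /fps2_add /fps2_opp /fps2_scale /mono.
case: m => [|[|[|m]]]; case: n => [|[|n]] //=; rewrite ?subn0 /=; ring.
Qed.

Theorem proposition4p4 (R : numFieldType) (q : nat) (lambda : R)
    (beta : nat -> R)
    (hq1 : (1 < q)%N) (hqodd : odd q)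
    (hbeta0 : beta 0%N = 1)
    (hrec : forall l : nat,
        q%:R * beta l.+2 - lambda * beta l.+1 + beta l = 0)
    (j : nat) :
  let qi := (q%:R : R)^-1 in
  (U_series beta j
     * ((1%:S - (lambda * qi) *: 'x + qi *: ('x ^+ 2)) * (1%:S + qi *: 'y)))%F
  = ('y ^+ j
     * (((lambda * qi)%:S - qi *: 'x - (qi ^+ 2) *: ('x * 'y)) * B_series beta j
        + (beta j * beta j.+1 - lambda * qi * beta j ^+ 2)%:S))%F.
Proof.
move=> qi.
have qn0 : (q%:R : R) != 0 by rewrite pnatr_eq0 -lt0n (ltn_trans _ hq1).
have rec l : beta l.+2 = lambda * qi * beta l.+1 - qi * beta l.
  have e : q%:R * beta l.+2 = lambda * beta l.+1 - beta l.
    by rewrite -[LHS]subr0 -(hrec l); ring.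
  by rewrite -[beta l.+2]mul1r -(mulVf qn0) -[_ * _ * beta l.+2]mulrA e /qi; ring.
rewrite (@AB_mono R (lambda * qi) qi).
clearbody qi.
apply: functional_extensionality => m; apply: functional_extensionality => n.
rewrite !(mulD_r, mulN_r, mulZ_r) !mul_mono_r Yj_mono mul_mono_l.
rewrite !C_mono X_mono Y_mono mono_mul /=.
rewrite /fps2_add /fps2_opp /fps2_scale.
rewrite !(mulD_l, mulN_l, mulZ_l) !mul_mono_l.
rewrite /U_series /B_series /mono.
rewrite !subn0.
case: (leqP j n) => hjn.
  rewrite -(subnK hjn); move: (n - j)%N => t {hjn}.
  rewrite ?leq_addl ?addnK ?subn0.
  case: t => [|t]; case: m => [|[|m]]; rewrite /= ?add0n ?addSn ?subSS ?subn0 ?leq_addl ?addnK /=.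
  all: try (case: j => [|j] /=; rewrite ?subSS ?subn0 ?ltnn /=).
  all: rewrite ?addn0 ?add0n ?addnS ?addSn; rewrite ?rec.
  all: try ring.
 
have -> : (j <= n - 1)%N = false by apply/negbTE; rewrite -ltnNge; lia.
by rewrite /= !if_same; ring.
Qed.
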